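(* There exists a bounded Jordan domain $D\subsetneq\mathbb{R}^2$ which is $\varphi$-uniform for some $\varphi$, such that $\mathbb{R}^2\setminus\overline{D}$ is not $\psi$-uniform for any $\psi$.
   Context: For a domain $G\subsetneq\mathbb{R}^n$ and $x\in G$, $\delta(x)$ denotes the Euclidean distance from $x$ to $\partial G$. The quasihyperbolic metric is $k_G(x,y)=\inf_\gamma\int_\gamma\frac{|dz|}{\delta(z)}$, the infimum over rectifiable paths joining $x,y$ in $G$. Given a strictly increasing homeomorphism $\varphi:[0,\infty)\to[0,\infty)$ with $\varphi(0)=0$, $G$ is $\varphi$-uniform if $k_G(x,y)\le\varphi\big(\frac{|x-y|}{\min\{\delta(x),\delta(y)\}}\big)$ for all $x,y\in G$; ''not $\psi$-uniform for any $\psi$'' means this fails for every such homeomorphism $\psi$. *)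

(* Defs.v *)
From Stdlib Require Import Reals.
From Coquelicot Require Import Coquelicot.
Open Scope R_scope.

Definition pt : Type := (R * R)%type.
Definition dist2 (p q : pt) : R :=
  sqrt ((fst p - fst q) ^ 2 + (snd p - snd q) ^ 2).
Definition norm2 (p : pt) : R := sqrt (fst p ^ 2 + snd p ^ 2).

Definition is_open (G : pt -> Prop) : Prop :=
  forall x, G x -> exists r, 0 < r /\ forall y, dist2 x y < r -> G y.
Definition closure (G : pt -> Prop) (x : pt) : Prop :=
  forall r, 0 < r -> exists y, G y /\ dist2 x y < r.
Definition interior (G : pt -> Prop) (x : pt) : Prop :=
  exists r, 0 < r /\ forall y, dist2 x y < r -> G y.
Definition boundary (G : pt -> Prop) (x : pt) : Prop :=
  closure G x /\ ~ interior G x.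
Definition is_connected (G : pt -> Prop) : Prop :=
  ~ exists U V : pt -> Prop, is_open U /\ is_open V /\
      (forall x, G x -> U x \/ V x) /\
      (forall x, G x -> U x -> V x -> False) /\
      (exists x, G x /\ U x) /\ (exists x, G x /\ V x).
Definition is_domain (G : pt -> Prop) : Prop :=
  (exists x, G x) /\ is_open G /\ is_connected G.
Definition is_bounded (G : pt -> Prop) : Prop :=
  exists M, forall x, G x -> norm2 x <= M.

Definition cont01 (g : R -> pt) : Prop :=
  forall t, 0 <= t <= 1 -> forall eps, 0 < eps -> exists eta, 0 < eta /\
    forall s, 0 <= s <= 1 -> Rabs (s - t) < eta -> dist2 (g s) (g t) < eps.

Definition jordan_curve (g : R -> pt) : Prop :=
  cont01 g /\ g 0 = g 1 /\
  (forall s t, 0 <= s < 1 -> 0 <= t < 1 -> g s = g t -> s = t).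
Definition jordan_domain (D : pt -> Prop) : Prop :=
  is_domain D /\ exists g, jordan_curve g /\
    forall z, boundary D z <-> exists t, 0 <= t <= 1 /\ g t = z.

Fixpoint rsum (f : nat -> R) (n : nat) : R :=
  match n with O => 0 | S k => rsum f k + f k end.

Definition partition (a b : R) (n : nat) (p : nat -> R) : Prop :=
  p O = a /\ p n = b /\ (forall i, (i < n)%nat -> p i < p (S i)).

Definition arclen (g : R -> pt) (a b : R) : Rbar :=
  Lub_Rbar (fun v => exists n p, partition a b n p /\
              v = rsum (fun i => dist2 (g (p i)) (g (p (S i)))) n).
Definition rectifiable (g : R -> pt) : Prop := is_finite (arclen g 0 1).
Definition arcfun (g : R -> pt) (t : R) : R := real (arclen g 0 t).

(** Line integral  \int_g w ds  as a Riemann-Stieltjes integral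
    \int_0^1 w(g t) d s(t) with respect to the arc length function. *)
Definition is_line_int (w : pt -> R) (g : R -> pt) (I : R) : Prop :=
  forall eps, 0 < eps -> exists eta, 0 < eta /\
    forall n p xi, partition 0 1 n p ->
      (forall i, (i < n)%nat -> p (S i) - p i < eta) ->
      (forall i, (i < n)%nat -> p i <= xi i <= p (S i)) ->
      Rabs (rsum (fun i => w (g (xi i)) * (arcfun g (p (S i)) - arcfun g (p i))) n
            - I) < eps.

Definition delta (G : pt -> Prop) (x : pt) : R :=
  real (Glb_Rbar (fun r => exists z, boundary G z /\ r = dist2 x z)).

Definition path_in (G : pt -> Prop) (x y : pt) (g : R -> pt) : Prop :=
  cont01 g /\ g 0 = x /\ g 1 = y /\ (forall t, 0 <= t <= 1 -> G (g t)).

Definition qh_metric (G : pt -> Prop) (x y : pt) : Rbar :=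
  Glb_Rbar (fun v => exists g, path_in G x y g /\ rectifiable g /\
              is_line_int (fun z => / delta G z) g v).

Definition homeo0 (phi : R -> R) : Prop :=
  phi 0 = 0 /\
  (forall s t, 0 <= s -> s < t -> phi s < phi t) /\
  (forall t, 0 <= t -> forall eps, 0 < eps -> exists eta, 0 < eta /\
     forall s, 0 <= s -> Rabs (s - t) < eta -> Rabs (phi s - phi t) < eps) /\
  (forall y, 0 <= y -> exists x, 0 <= x /\ phi x = y).

Definition phi_uniform (G : pt -> Prop) (phi : R -> R) : Prop :=
  forall x y, G x -> G y ->
    Rbar_le (qh_metric G x y)
            (Finite (phi (dist2 x y / Rmin (delta G x) (delta G y)))).

Definition ext_closure (D : pt -> Prop) (x : pt) : Prop := ~ closure D x.

(* Main.v *)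
Require Import Defs.
From Stdlib Require Import Reals.
From Coquelicot Require Import Coquelicot.
Open Scope R_scope.
From Stdlib Require Import Rgeom Lra Lia Psatz Classical Arith.
Open Scope R_scope.


Lemma dist2_nonneg p q : 0 <= dist2 p q.
Proof. unfold dist2; apply sqrt_pos. Qed.

Lemma dist2_sym p q : dist2 p q = dist2 q p.
Proof. unfold dist2; f_equal; ring. Qed.

Lemma dist2_refl p : dist2 p p = 0.
Proof. unfold dist2. replace ((fst p - fst p)^2 + (snd p - snd p)^2) with 0 by ring. apply sqrt_0. Qed.

Lemma dist2_tri p q r : dist2 p r <= dist2 p q + dist2 q r.
Proof.
  unfold dist2. pose proof (Rgeom.triangle (fst p) (snd p) (fst r) (snd r) (fst q) (snd q)) as H.
  unfold dist_euc in H. rewrite !Rsqr_pow2 in H. exact H.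
Qed.

Lemma abs_sqrt_sq a : Rabs a = sqrt (a^2).
Proof. rewrite <- pow2_abs. rewrite sqrt_pow2; [reflexivity| apply Rabs_pos]. Qed.

Lemma dist2_fst p q : Rabs (fst p - fst q) <= dist2 p q.
Proof. unfold dist2. rewrite abs_sqrt_sq. apply sqrt_le_1_alt. pose proof (pow2_ge_0 (snd p - snd q)). lra. Qed.

Lemma dist2_snd p q : Rabs (snd p - snd q) <= dist2 p q.
Proof. unfold dist2. rewrite abs_sqrt_sq. apply sqrt_le_1_alt. pose proof (pow2_ge_0 (fst p - fst q)). lra. Qed.

Lemma dist2_le_sum p q : dist2 p q <= Rabs (fst p - fst q) + Rabs (snd p - snd q).
Proof.
  unfold dist2. set (a := fst p - fst q). set (b := snd p - snd q).
  rewrite <- (sqrt_pow2 (Rabs a + Rabs b)) by (pose proof (Rabs_pos a); pose proof (Rabs_pos b); lra).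
  apply sqrt_le_1_alt. rewrite <- (pow2_abs a), <- (pow2_abs b).
  pose proof (Rabs_pos a); pose proof (Rabs_pos b).
  pose proof (Rmult_le_pos _ _ H H0).
  replace ((Rabs a + Rabs b)^2) with (Rabs a ^2 + Rabs b^2 + 2 * (Rabs a * Rabs b)) by ring. lra.
Qed.

Lemma dist2_sq p q : dist2 p q ^ 2 = (fst p - fst q)^2 + (snd p - snd q)^2.
Proof. unfold dist2. apply pow2_sqrt. pose proof (pow2_ge_0 (fst p - fst q)); pose proof (pow2_ge_0 (snd p - snd q)); lra. Qed.

Definition lerp (x y : pt) (l : R) : pt :=
  (fst x + l * (fst y - fst x), snd x + l * (snd y - snd x)).

Lemma dist2_lerp x y a b : dist2 (lerp x y a) (lerp x y b) = Rabs (a - b) * dist2 x y.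
Proof.
  unfold dist2.
  transitivity (sqrt ((a - b)^2 * ((fst x - fst y) ^ 2 + (snd x - snd y) ^ 2))).
  { f_equal. unfold lerp; cbn [fst snd]. ring. }
  rewrite sqrt_mult_alt by apply pow2_ge_0. rewrite <- abs_sqrt_sq. reflexivity.
Qed.

Lemma lerp0 x y : lerp x y 0 = x.
Proof. destruct x; unfold lerp; simpl; f_equal; ring. Qed.
Lemma lerp1 x y : lerp x y 1 = y.
Proof. destruct x, y; unfold lerp; simpl; f_equal; ring. Qed.
Lemma lerp_sym x y l : lerp x y l = lerp y x (1 - l).
Proof. unfold lerp; f_equal; ring. Qed.

Lemma dist2_lt_coord p q r : dist2 p q < r -> Rabs (fst p - fst q) < r /\ Rabs (snd p - snd q) < r.
Proof. intros; pose proof (dist2_fst p q); pose proof (dist2_snd p q); lra. Qed.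

Lemma glb_props (E : R -> Prop) :
  (exists x, E x) -> (forall x, E x -> 0 <= x) ->
  Glb_Rbar E = Finite (real (Glb_Rbar E)) /\
  (forall x, E x -> real (Glb_Rbar E) <= x) /\
  (forall r, (forall x, E x -> r <= x) -> r <= real (Glb_Rbar E)).
Proof.
  intros [x0 Hx0] Hpos. pose proof (Glb_Rbar_correct E) as [Hlb Hgr].
  destruct (Glb_Rbar E) as [l| |] eqn:Hg.
  - split; [reflexivity|]. split.
    + intros x Hx. specialize (Hlb x Hx). simpl in Hlb. exact Hlb.
    + intros r Hr. assert (Rbar_le (Finite r) (Finite l)) as H.
      { apply Hgr. intros x Hx. simpl. apply Hr; auto. } exact H.
  - specialize (Hlb x0 Hx0). simpl in Hlb. contradiction.
  - assert (Rbar_le (Finite 0) m_infty) as H. { apply Hgr. intros x Hx. simpl. apply Hpos; auto. }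
    simpl in H. contradiction.
Qed.

Lemma lub_props (E : R -> Prop) M :
  (exists x, E x) -> (forall x, E x -> x <= M) ->
  Lub_Rbar E = Finite (real (Lub_Rbar E)) /\
  (forall x, E x -> x <= real (Lub_Rbar E)) /\
  (forall r, (forall x, E x -> x <= r) -> real (Lub_Rbar E) <= r).
Proof.
  intros [x0 Hx0] Hb. pose proof (Lub_Rbar_correct E) as [Hub Hle].
  destruct (Lub_Rbar E) as [l| |] eqn:Hg.
  - split; [reflexivity|]. split.
    + intros x Hx. specialize (Hub x Hx). simpl in Hub. exact Hub.
    + intros r Hr. assert (Rbar_le (Finite l) (Finite r)) as H.
      { apply Hle. intros x Hx. simpl. apply Hr; auto. } exact H.
  - assert (Rbar_le p_infty (Finite M)) as H. { apply Hle. intros x Hx. simpl. apply Hb; auto. }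
    simpl in H. contradiction.
  - specialize (Hub x0 Hx0). simpl in Hub. contradiction.
Qed.

Lemma delta_le G z b : boundary G b -> delta G z <= dist2 z b.
Proof.
  intros Hb. unfold delta.
  destruct (glb_props (fun r => exists z0, boundary G z0 /\ r = dist2 z z0)) as [_ [H _]].
  - exists (dist2 z b); eauto.
  - intros x [z0 [_ ->]]; apply dist2_nonneg.
  - apply H; eauto.
Qed.

Lemma delta_ge G z r : (exists b, boundary G b) ->
  (forall b, boundary G b -> r <= dist2 z b) -> r <= delta G z.
Proof.
  intros [b Hb] Hr. unfold delta.
  destruct (glb_props (fun r => exists z0, boundary G z0 /\ r = dist2 z z0)) as [_ [_ H]].
  - exists (dist2 z b); eauto.
  - intros x [z0 [_ ->]]; apply dist2_nonneg.
  - apply H. intros x [z0 [Hz0 ->]]. auto.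
Qed.

Lemma ball_boundary G z r b : (forall y, dist2 z y < r -> G y) -> boundary G b -> r <= dist2 z b.
Proof.
  intros Hball [_ Hni]. destruct (Rle_lt_dec r (dist2 z b)) as [H|H]; auto.
  exfalso. apply Hni. exists (r - dist2 z b). split; [lra|].
  intros y Hy. apply Hball. pose proof (dist2_tri z b y). lra.
Qed.

Lemma delta_ge_ball G z r : (exists b, boundary G b) -> (forall y, dist2 z y < r -> G y) -> r <= delta G z.
Proof. intros Hb Hball. apply delta_ge; auto. intros b; apply ball_boundary; auto. Qed.

Lemma delta_lip G z z' : (exists b, boundary G b) -> delta G z <= delta G z' + dist2 z z'.
Proof.
  intros Hb. assert (delta G z - dist2 z z' <= delta G z'); [|lra].
  apply delta_ge; auto. intros b0 Hb0. pose proof (delta_le G z b0 Hb0).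
  pose proof (dist2_tri z z' b0). lra.
Qed.

Lemma delta_lip_abs G z z' : (exists b, boundary G b) -> Rabs (delta G z - delta G z') <= dist2 z z'.
Proof.
  intros Hb. pose proof (delta_lip G z z' Hb). pose proof (delta_lip G z' z Hb).
  rewrite dist2_sym in H0. apply Rabs_le. lra.
Qed.

Lemma abs_le_inv a b : Rabs a <= b -> - b <= a <= b.
Proof. unfold Rabs; destruct (Rcase_abs a); lra. Qed.
Lemma abs_lt_inv a b : Rabs a < b -> - b < a < b.
Proof. unfold Rabs; destruct (Rcase_abs a); lra. Qed.


Definition Dc (z : pt) : Prop := 0 < fst z < 1 /\ Rabs (snd z) < fst z ^ 2.
Definition Pf (z : pt) : R := Rmin (fst z ^ 2 - Rabs (snd z)) (1 - fst z).
Definition Kc (z : pt) : Prop := 0 <= fst z <= 1 /\ Rabs (snd z) <= fst z ^ 2.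
Definition Cc (z : pt) : Prop :=
  (exists u, 0 <= u <= 1 /\ z = (u, u^2)) \/
  (exists u, 0 <= u <= 1 /\ z = (u, - u^2)) \/
  (exists v, -1 <= v <= 1 /\ z = (1, v)).
Definition c0 : pt := (1/2, 0).

Lemma Pf_pos z : Dc z -> 0 < Pf z.
Proof. intros [[H1 H2] H3]. unfold Pf. apply Rmin_glb_lt; lra. Qed.

Lemma Pf_le1 z : Pf z <= fst z ^ 2 - Rabs (snd z).
Proof. apply Rmin_l. Qed.
Lemma Pf_le2 z : Pf z <= 1 - fst z.
Proof. apply Rmin_r. Qed.

Lemma D_ball z y : Dc z -> dist2 z y < Pf z / 3 -> Dc y.
Proof.
  intros HD Hd. pose proof (Pf_le1 z) as HP1. pose proof (Pf_le2 z) as HP2.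
  pose proof (Pf_pos z HD) as HP0.
  destruct (dist2_lt_coord _ _ _ Hd) as [Ha Hb].
  destruct z as [u v], y as [u' v']; unfold Dc in *; cbn [fst snd] in *.
  destruct HD as [[H1 H2] H3].
  set (r := Pf (u, v)) in *. clearbody r. clear Hd.
  pose proof (Rabs_pos v). pose proof (Rabs_pos v').
  pose proof Ha as Ha0. apply Rabs_def2 in Ha. destruct Ha as [Ha1 Ha2].
  assert (Hv' : Rabs v' <= Rabs v + Rabs (v - v')).
  { replace v' with (v - (v - v')) at 1 by ring. apply Rabs_triang_inv2 || (eapply Rle_trans; [apply Rabs_triang|]; rewrite Rabs_Ropp; lra). }
  assert (u^2 < u) by nra.
  split; [split|].
  - lra.
  - lra.
  - assert (u'^2 >= u^2 - 2 * Rabs (u - u')).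
    { destruct (Rle_lt_dec u u'); [rewrite Rabs_left1 by lra | rewrite Rabs_right by lra]; nra. }
    lra.
Qed.

Lemma D_open : is_open Dc.
Proof.
  intros z Hz. exists (Pf z / 3). split.
  - pose proof (Pf_pos z Hz); lra.
  - intros y Hy. eapply D_ball; eauto.
Qed.

Lemma closure_K z : closure Dc z -> Kc z.
Proof.
  intros Hc. destruct z as [u v]. unfold Kc; cbn [fst snd].
  destruct (Rlt_le_dec u 0) as [Hu|Hu].
  { exfalso. destruct (Hc (-u)) as [[u' v'] [[[H1 _] _] Hd]]; [lra|].
    pose proof (dist2_fst (u,v) (u',v')). cbn [fst snd] in *. rewrite Rabs_left in H; lra. }
  destruct (Rlt_le_dec 1 u) as [Hu'|Hu'].
  { exfalso. destruct (Hc (u-1)) as [[u' v'] [[[_ H1] _] Hd]]; [lra|].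
    pose proof (dist2_fst (u,v) (u',v')). cbn [fst snd] in *. rewrite Rabs_right in H; lra. }
  split; [lra|].
  destruct (Rle_lt_dec (Rabs v) (u^2)) as [H|H]; auto. exfalso.
  set (r := Rmin 1 ((Rabs v - u^2)/4)).
  assert (Hr : 0 < r) by (unfold r; apply Rmin_glb_lt; lra).
  assert (Hr1 : r <= 1) by apply Rmin_l.
  assert (Hr2 : r <= (Rabs v - u^2)/4) by apply Rmin_r.
  destruct (Hc r Hr) as [[u' v'] [[_ H3] Hd]].
  destruct (dist2_lt_coord _ _ _ Hd) as [Ha Hb]. cbn [fst snd] in *.
  assert (Rabs v <= Rabs v' + Rabs (v - v')).
  { replace v with (v' + (v - v')) at 1 by ring. apply Rabs_triang. }
  assert (u'^2 <= u^2 + 2 * Rabs (u - u') + Rabs (u - u')^2).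
  { destruct (Rle_lt_dec u u'); [rewrite Rabs_left1 by lra | rewrite Rabs_right by lra]; nra. }
  pose proof (Rabs_pos (u - u')).
  assert (Rabs (u - u') ^2 <= r) by nra.
  lra.
Qed.

Lemma D_closure z : Dc z -> closure Dc z.
Proof. intros Hz r Hr. exists z. split; auto. rewrite dist2_refl. lra. Qed.

Lemma open_interior G z : is_open G -> G z -> Defs.interior G z.
Proof. intros Ho Hz. destruct (Ho z Hz) as [r [Hr H]]. exists r; auto. Qed.

Lemma C_closure z : Cc z -> closure Dc z.
Proof.
  intros HC r Hr.
  set (e := Rmin (1/2) (r/4)).
  assert (He : 0 < e) by (unfold e; apply Rmin_glb_lt; lra).
  assert (He1 : e <= 1/2) by apply Rmin_l.
  assert (He2 : e <= r/4) by apply Rmin_r.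
  exists (lerp z c0 e). split.
  - clearbody e.
    destruct HC as [[u [Hu ->]]|[[u [Hu ->]]|[v [Hv ->]]]];
      unfold Dc, lerp, c0; cbn [fst snd].
    + assert (0 <= (1 - e) * u) by (apply Rmult_le_pos; lra).
      assert (0 <= e * (1 - e) * u * (1 - u)) by (repeat apply Rmult_le_pos; lra).
      split; [split|]; [nra|nra|].
      replace (u ^ 2 + e * (0 - u ^ 2)) with ((1 - e) * u^2) by ring.
      rewrite Rabs_right by (apply Rle_ge, Rmult_le_pos; [lra| apply pow2_ge_0]).
      nra.
    + assert (0 <= (1 - e) * u) by (apply Rmult_le_pos; lra).
      assert (0 <= e * (1 - e) * u * (1 - u)) by (repeat apply Rmult_le_pos; lra).
      split; [split|]; [nra|nra|].
      replace (- u ^ 2 + e * (0 - - u ^ 2)) with (- ((1 - e) * u^2)) by ring.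
      rewrite Rabs_Ropp.
      rewrite Rabs_right by (apply Rle_ge, Rmult_le_pos; [lra| apply pow2_ge_0]).
      nra.
    + split; [split|]; [nra|nra|].
      assert (Rabs (v + e * (0 - v)) = (1 - e) * Rabs v).
      { replace (v + e * (0 - v)) with ((1-e) * v) by ring. rewrite Rabs_mult, (Rabs_right (1 - e)) by lra. ring. }
      rewrite H.
      assert (Rabs v <= 1) by (apply Rabs_le; lra).
      assert ((1 - e) * Rabs v <= 1 - e) by (apply Rmult_le_compat_l with (r := 1 - e) in H0; lra).
      nra.
  - rewrite <- (lerp0 z c0) at 1. rewrite dist2_lerp.
    assert (dist2 z c0 <= 2).
    { eapply Rle_trans; [apply dist2_le_sum|].
      destruct HC as [[u [Hu ->]]|[[u [Hu ->]]|[v [Hv ->]]]]; unfold c0; cbn [fst snd];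
      apply Rplus_le_compat; apply Rabs_le; nra. }
    rewrite Rabs_left1 by lra. pose proof (dist2_nonneg z c0). nra.
Qed.

Lemma C_not_interior z : Cc z -> ~ Defs.interior Dc z.
Proof.
  intros HC [r [Hr Hi]].
  destruct HC as [[u [Hu ->]]|[[u [Hu ->]]|[v [Hv ->]]]].
  - specialize (Hi (u, u^2 + r/2)). destruct Hi as [_ H].
    + eapply Rle_lt_trans; [apply dist2_le_sum|]. cbn [fst snd].
      replace (u - u) with 0 by ring. replace (u ^ 2 - (u ^ 2 + r / 2)) with (- (r/2)) by ring.
      rewrite Rabs_R0, Rabs_Ropp, Rabs_right; lra.
    + cbn [fst snd] in H. rewrite Rabs_right in H; nra.
  - specialize (Hi (u, - u^2 - r/2)). destruct Hi as [_ H].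
    + eapply Rle_lt_trans; [apply dist2_le_sum|]. cbn [fst snd].
      replace (u - u) with 0 by ring. replace (- u ^ 2 - (- u ^ 2 - r / 2)) with (r/2) by ring.
      rewrite Rabs_R0, Rabs_right; lra.
    + cbn [fst snd] in H. rewrite Rabs_left1 in H; nra.
  - specialize (Hi (1 + r/2, v)). destruct Hi as [[_ H] _].
    + eapply Rle_lt_trans; [apply dist2_le_sum|]. cbn [fst snd].
      replace (v - v) with 0 by ring. replace (1 - (1 + r / 2)) with (- (r/2)) by ring.
      rewrite Rabs_R0, Rabs_Ropp, Rabs_right; lra.
    + cbn [fst snd] in H. lra.
Qed.

Lemma bd_char z : boundary Dc z <-> Cc z.
Proof.
  split.
  - intros [Hc Hni]. pose proof (closure_K z Hc) as [Hu Hv].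
    assert (~ Dc z) by (intro H; apply Hni; apply open_interior; auto; apply D_open).
    destruct z as [u v]; cbn [fst snd] in *.
    destruct (Req_dec u 0) as [->|H0].
    { left. exists 0. split; [lra|]. pose proof (Rabs_pos v).
      assert (Hv0 : Rabs v = 0) by nra. apply Rabs_eq_0 in Hv0. subst. f_equal. ring. }
    destruct (Req_dec u 1) as [->|H1].
    { right; right. exists v. split; [|reflexivity]. assert (Rabs v <= 1) by lra. apply abs_le_inv in H1. lra. }
    assert (Hvu : Rabs v = u^2).
    { destruct (Rle_lt_dec (u^2) (Rabs v)); [lra|]. exfalso. apply H. unfold Dc; cbn; split; [lra|auto]. }
    destruct (Rle_lt_dec 0 v).
    + left. exists u. split; [lra|]. rewrite Rabs_right in Hvu by lra. subst; reflexivity.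
    + right; left. exists u. split; [lra|]. rewrite Rabs_left in Hvu by lra.
      f_equal. lra.
  - intros HC. split; [apply C_closure|apply C_not_interior]; auto.
Qed.

Lemma bd_nonempty : exists b, boundary Dc b.
Proof. exists (0, 0^2). apply bd_char. left. exists 0. split; [lra|reflexivity]. Qed.

Lemma delta_D_lower z : Dc z -> Pf z / 3 <= delta Dc z.
Proof.
  intros Hz. apply delta_ge_ball; [apply bd_nonempty|]. intros y Hy. eapply D_ball; eauto.
Qed.

Lemma delta_D_upper z : Dc z -> delta Dc z <= Pf z.
Proof.
  intros Hz. pose proof Hz as [[H1 H2] H3]. destruct z as [u v]; cbn [fst snd] in *.
  unfold Pf; cbn [fst snd]. apply Rmin_glb.
  - destruct (Rle_lt_dec 0 v).
    + eapply Rle_trans; [apply (delta_le _ _ (u, u^2))|].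
      * apply bd_char. left. exists u. split; [lra|reflexivity].
      * unfold dist2; cbn [fst snd]. replace ((u-u)^2 + (v - u^2)^2) with ((u^2 - v)^2) by ring.
        rewrite sqrt_pow2; rewrite Rabs_right in *; lra.
    + eapply Rle_trans; [apply (delta_le _ _ (u, - u^2))|].
      * apply bd_char. right; left. exists u. split; [lra|reflexivity].
      * unfold dist2; cbn [fst snd]. replace ((u-u)^2 + (v - - u^2)^2) with ((u^2 + v)^2) by ring.
        rewrite sqrt_pow2; rewrite Rabs_left in *; lra.
  - eapply Rle_trans; [apply (delta_le _ _ (1, v))|].
    + apply bd_char. right; right. exists v. split; [|reflexivity].
      assert (u^2 < 1) by nra. apply abs_le_inv. lra.
    + unfold dist2; cbn [fst snd]. replace ((u-1)^2 + (v - v)^2) with ((1 - u)^2) by ring.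
      rewrite sqrt_pow2; lra.
Qed.


Lemma c0P x m l : Dc x -> 0 < m -> m <= Pf x -> 0 <= l <= 1 ->
  Dc (lerp x c0 l) /\ m / 2 <= Pf (lerp x c0 l).
Proof.
  intros Hx Hm HP Hl. pose proof (Pf_le1 x) as HP1. pose proof (Pf_le2 x) as HP2.
  destruct x as [u v]. destruct Hx as [[H1 H2] H3]. unfold lerp, c0, Pf in *; cbn [fst snd] in *.
  assert (Hv : Rabs (v + l * (0 - v)) = (1 - l) * Rabs v).
  { replace (v + l * (0 - v)) with ((1 - l) * v) by ring. rewrite Rabs_mult, (Rabs_right (1 - l)) by lra. reflexivity. }
  rewrite Hv.
  assert (Hid : (u + l * (1 / 2 - u)) ^ 2 - (1 - l) * Rabs v
                = (1 - l) * (u^2 - Rabs v) + l * (u * (1 - u)) + l^2 * (1/2 - u)^2) by field.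
  assert (Hu1 : m / 2 <= u * (1 - u)).
  { destruct (Rle_lt_dec u (1/2)).
    - pose proof (Rabs_pos v). assert (u^2 <= u) by nra. nra.
    - nra. }
  assert (Hm12 : m <= 1/2).
  { destruct (Rle_lt_dec u (1/2)).
    - pose proof (Rabs_pos v). nra.
    - lra. }
  assert (Hf : m / 2 <= (u + l * (1 / 2 - u)) ^ 2 - (1 - l) * Rabs v).
  { rewrite Hid. assert (0 <= l^2 * (1/2 - u)^2) by (apply Rmult_le_pos; apply pow2_ge_0).
    assert (l * (m/2) <= l * (u * (1 - u))) by (apply Rmult_le_compat_l; lra).
    assert ((1 - l) * m <= (1 - l) * (u^2 - Rabs v)) by (apply Rmult_le_compat_l; lra). nra. }
  assert (Hg : m <= 1 - (u + l * (1 / 2 - u))).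
  { replace (1 - (u + l * (1 / 2 - u))) with ((1 - l) * (1 - u) + l * (1/2)) by field.
    assert ((1 - l) * m <= (1 - l) * (1 - u)) by (apply Rmult_le_compat_l; lra).
    assert (l * m <= l * (1/2)) by (apply Rmult_le_compat_l; lra). nra. }
  split.
  - unfold Dc; cbn [fst snd]. rewrite Hv. split; [split|]; [|lra|lra].
    replace (u + l * (1 / 2 - u)) with ((1 - l) * u + l * (1/2)) by field.
    assert (0 <= (1 - l) * u) by (apply Rmult_le_pos; lra). nra.
  - apply Rmin_glb; lra.
Qed.

Lemma segP x y m l : Dc x -> Dc y -> 0 < m -> m <= Pf x -> m <= Pf y ->
  dist2 x y ^ 2 <= 2 * m -> 0 <= l <= 1 ->
  Dc (lerp x y l) /\ m / 2 <= Pf (lerp x y l).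
Proof.
  intros Hx Hy Hm HPx HPy Hd Hl.
  pose proof (Pf_le1 x) as HPx1. pose proof (Pf_le2 x) as HPx2.
  pose proof (Pf_le1 y) as HPy1. pose proof (Pf_le2 y) as HPy2.
  rewrite dist2_sq in Hd.
  destruct x as [u1 v1], y as [u2 v2]. destruct Hx as [[H1 H2] H3]. destruct Hy as [[H4 H5] H6].
  unfold lerp, Pf in *; cbn [fst snd] in *.
  assert (Hv : Rabs (v1 + l * (v2 - v1)) <= (1 - l) * Rabs v1 + l * Rabs v2).
  { replace (v1 + l * (v2 - v1)) with ((1 - l) * v1 + l * v2) by ring.
    eapply Rle_trans; [apply Rabs_triang|]. rewrite !Rabs_mult, (Rabs_right (1 - l)), (Rabs_right l) by lra. lra. }
  assert (Hid : (u1 + l * (u2 - u1)) ^ 2 = (1 - l) * u1^2 + l * u2^2 - l * (1 - l) * (u1 - u2)^2) by ring.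
  assert (Hll : l * (1 - l) <= 1/4) by (pose proof (pow2_ge_0 (2 * l - 1)); nra).
  assert (Hdu : (u1 - u2)^2 <= 2 * m) by (pose proof (pow2_ge_0 (v1 - v2)); lra).
  assert (Hq : l * (1 - l) * (u1 - u2)^2 <= m / 2).
  { assert (0 <= l * (1 - l)) by nra. pose proof (pow2_ge_0 (u1 - u2)). nra. }
  assert (Hf : m / 2 <= (u1 + l * (u2 - u1)) ^ 2 - Rabs (v1 + l * (v2 - v1))).
  { rewrite Hid.
    assert ((1 - l) * m <= (1 - l) * (u1^2 - Rabs v1)) by (apply Rmult_le_compat_l; lra).
    assert (l * m <= l * (u2^2 - Rabs v2)) by (apply Rmult_le_compat_l; lra).
    nra. }
  assert (Hg : m <= 1 - (u1 + l * (u2 - u1))).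
  { replace (1 - (u1 + l * (u2 - u1))) with ((1 - l) * (1 - u1) + l * (1 - u2)) by ring.
    assert ((1 - l) * m <= (1 - l) * (1 - u1)) by (apply Rmult_le_compat_l; lra).
    assert (l * m <= l * (1 - u2)) by (apply Rmult_le_compat_l; lra). nra. }
  split.
  - unfold Dc; cbn [fst snd]. split; [split|]; [|lra|lra].
    replace (u1 + l * (u2 - u1)) with ((1 - l) * u1 + l * u2) by ring.
    assert (0 <= (1 - l) * u1) by (apply Rmult_le_pos; lra).
    assert (0 <= l * u2) by (apply Rmult_le_pos; lra).
    destruct (Req_dec l 0); [subst; lra|]. nra.
  - apply Rmin_glb; lra.
Qed.

Definition lipon (g : R -> pt) K a b :=
  forall s t, a <= s <= b -> a <= t <= b -> dist2 (g s) (g t) <= K * Rabs (s - t).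

Lemma lip_glue g K a b c : a <= b <= c -> lipon g K a b -> lipon g K b c -> lipon g K a c.
Proof.
  intros Hb H1 H2 s t Hs Ht.
  destruct (Rle_dec s b), (Rle_dec t b).
  - apply H1; lra.
  - eapply Rle_trans; [apply (dist2_tri _ (g b))|].
    pose proof (H1 s b ltac:(lra) ltac:(lra)) as E1. pose proof (H2 b t ltac:(lra) ltac:(lra)) as E2.
    rewrite (Rabs_left1 (s - b)) in E1 by lra. rewrite (Rabs_left1 (b - t)) in E2 by lra.
    rewrite (Rabs_left1 (s - t)) by lra. lra.
  - eapply Rle_trans; [apply (dist2_tri _ (g b))|].
    pose proof (H2 s b ltac:(lra) ltac:(lra)) as E1. pose proof (H1 b t ltac:(lra) ltac:(lra)) as E2.
    rewrite (Rabs_right (s - b)) in E1 by lra. rewrite (Rabs_right (b - t)) in E2 by lra.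
    rewrite (Rabs_right (s - t)) by lra. lra.
  - apply H2; lra.
Qed.

Lemma lip_cont01 g K : 0 <= K -> lipon g K 0 1 -> cont01 g.
Proof.
  intros HK Hl t Ht eps Heps. exists (eps / (K + 1)). split.
  - apply Rdiv_lt_0_compat; lra.
  - intros s Hs Hst. eapply Rle_lt_trans; [apply Hl; auto|].
    apply Rle_lt_trans with (K * (eps / (K + 1))).
    + apply Rmult_le_compat_l; lra.
    + unfold Rdiv. rewrite <- Rmult_assoc. apply Rmult_lt_reg_r with (K + 1); [lra|].
      rewrite Rmult_assoc, Rinv_l by lra. nra.
Qed.

(** the Jordan curve *)
Definition jg (t : R) : pt :=
  if Rle_dec t (1/3) then (3 * t, (3 * t)^2)
  else if Rle_dec t (2/3) then (1, 3 - 6 * t)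
  else (3 - 3 * t, - (3 - 3 * t)^2).

Lemma jg_A t : t <= 1/3 -> jg t = (3 * t, (3 * t)^2).
Proof. intros; unfold jg; destruct (Rle_dec t (1/3)); [reflexivity|lra]. Qed.
Lemma jg_B t : 1/3 <= t <= 2/3 -> jg t = (1, 3 - 6 * t).
Proof.
  intros; unfold jg; destruct (Rle_dec t (1/3)).
  - assert (t = 1/3) by lra. subst. f_equal; field.
  - destruct (Rle_dec t (2/3)); [reflexivity|lra].
Qed.
Lemma jg_C t : 2/3 <= t -> jg t = (3 - 3 * t, - (3 - 3 * t)^2).
Proof.
  intros; unfold jg; destruct (Rle_dec t (1/3)); [lra|].
  destruct (Rle_dec t (2/3)).
  - assert (t = 2/3) by lra. subst. f_equal; field.
  - reflexivity.
Qed.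

Lemma sq_diff_abs a b : Rabs (a^2 - b^2) = Rabs (a + b) * Rabs (a - b).
Proof. rewrite <- Rabs_mult. f_equal. ring. Qed.

Lemma jg_lip : lipon jg 9 0 1.
Proof.
  apply lip_glue with (1/3); [lra| |].
  - intros s t Hs Ht. rewrite !jg_A by lra.
    eapply Rle_trans; [apply dist2_le_sum|]. cbn [fst snd].
    rewrite sq_diff_abs.
    replace (3 * s - 3 * t) with (3 * (s - t)) by ring.
    replace (3 * s + 3 * t) with (3 * (s + t)) by ring.
    rewrite !Rabs_mult, (Rabs_right 3) by lra.
    rewrite (Rabs_right (s + t)) by lra. pose proof (Rabs_pos (s - t)). nra.
  - apply lip_glue with (2/3); [lra| |].
    + intros s t Hs Ht. rewrite !jg_B by lra.
      eapply Rle_trans; [apply dist2_le_sum|]. cbn [fst snd].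
      replace (1 - 1) with 0 by ring. replace (3 - 6 * s - (3 - 6 * t)) with (-6 * (s - t)) by ring.
      rewrite Rabs_R0, Rabs_mult, Rabs_left by lra. pose proof (Rabs_pos (s - t)). lra.
    + intros s t Hs Ht. rewrite !jg_C by lra.
      eapply Rle_trans; [apply dist2_le_sum|]. cbn [fst snd].
      replace (- (3 - 3 * s) ^ 2 - - (3 - 3 * t) ^ 2) with (- ((3 - 3 * s) ^ 2 - (3 - 3 * t) ^ 2)) by ring.
      rewrite Rabs_Ropp, sq_diff_abs.
      replace (3 - 3 * s - (3 - 3 * t)) with (-3 * (s - t)) by ring.
      replace (3 - 3 * s + (3 - 3 * t)) with (3 * (2 - s - t)) by ring.
      rewrite !Rabs_mult, (Rabs_right 3), Rabs_left by lra.
      rewrite (Rabs_right (2 - s - t)) by lra. pose proof (Rabs_pos (s - t)). nra.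
Qed.

Lemma pair_eq (a b c d : R) : (a, b) = (c, d) -> a = c /\ b = d.
Proof. intros H; inversion H; auto. Qed.

Lemma jg_inj s t : 0 <= s < 1 -> 0 <= t < 1 -> jg s = jg t -> s = t.
Proof.
  intros Hs Ht Heq.
  assert (forall s t, 0 <= s < 1 -> 0 <= t < 1 -> jg s = jg t -> s <= t -> s = t) as Key.
  { clear. intros s t Hs Ht Heq Hle.
    destruct (Rle_dec t (1/3)).
    { rewrite !jg_A in Heq by lra. apply pair_eq in Heq. lra. }
    destruct (Rle_dec t (2/3)).
    { rewrite (jg_B t) in Heq by lra.
      destruct (Rle_dec s (1/3)).
      - rewrite jg_A in Heq by lra. apply pair_eq in Heq. destruct Heq as [E1 E2].
        assert (s = 1/3) by lra. subst. lra.
      - rewrite jg_B in Heq by lra. apply pair_eq in Heq. lra. }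
    rewrite (jg_C t) in Heq by lra.
    destruct (Rle_dec s (1/3)).
    - rewrite jg_A in Heq by lra. apply pair_eq in Heq. destruct Heq as [E1 E2].
      assert ((3 * s)^2 + (3 - 3 * t)^2 = 0) by lra.
      assert (3 - 3 * t = 0) by (pose proof (pow2_ge_0 (3 * s)); pose proof (pow2_ge_0 (3 - 3 * t)); nra).
      lra.
    - destruct (Rle_dec s (2/3)).
      + rewrite jg_B in Heq by lra. apply pair_eq in Heq. lra.
      + rewrite jg_C in Heq by lra. apply pair_eq in Heq. lra. }
  destruct (Rle_dec s t).
  - apply Key; auto.
  - symmetry. apply Key; auto. lra.
Qed.

Lemma jg_image z : (exists t, 0 <= t <= 1 /\ jg t = z) <-> Cc z.
Proof.
  split.
  - intros [t [Ht <-]].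
    destruct (Rle_dec t (1/3)).
    { rewrite jg_A by lra. left. exists (3 * t). split; [lra|reflexivity]. }
    destruct (Rle_dec t (2/3)).
    { rewrite jg_B by lra. right; right. exists (3 - 6 * t). split; [lra|reflexivity]. }
    rewrite jg_C by lra. right; left. exists (3 - 3 * t). split; [lra|reflexivity].
  - intros [[u [Hu ->]]|[[u [Hu ->]]|[v [Hv ->]]]].
    + exists (u / 3). split; [lra|]. rewrite jg_A by lra. f_equal; field.
    + exists (1 - u / 3). split; [lra|]. rewrite jg_C by lra. f_equal; field.
    + exists ((3 - v) / 6). split; [lra|]. rewrite jg_B by lra. f_equal; field.
Qed.

Lemma jg_jordan : jordan_curve jg.
Proof.
  split; [|split].
  - eapply lip_cont01; [|apply jg_lip]. lra.
  - rewrite jg_A by lra. rewrite jg_C by lra. f_equal; ring.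
  - apply jg_inj.
Qed.

Lemma path_sep G U V (g : R -> pt) : cont01 g -> (forall t, 0 <= t <= 1 -> G (g t)) ->
  is_open U -> is_open V -> (forall x, G x -> U x \/ V x) ->
  (forall x, G x -> U x -> V x -> False) -> U (g 0) -> V (g 1) -> False.
Proof.
  intros Hc HG HU HV Hcov Hdis H0 H1.
  set (S := fun t => 0 <= t <= 1 /\ forall s, 0 <= s <= t -> U (g s)).
  assert (HS0 : S 0). { split; [lra|]. intros s Hs. replace s with 0 by lra. auto. }
  destruct (completeness S) as [T [Hub Hlst]].
  { exists 1. intros t [Ht _]. lra. }
  { exists 0; auto. }
  assert (HT0 : 0 <= T) by (apply Hub; auto).
  assert (HT1 : T <= 1) by (apply Hlst; intros t [Ht _]; lra).
  assert (Hbelow : forall s, 0 <= s < T -> U (g s)).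
  { intros s Hs. destruct (classic (exists t, S t /\ s <= t)) as [[t [[_ Ht] Hst]]|Hn].
    - apply Ht. lra.
    - exfalso. assert (T <= s); [|lra]. apply Hlst. intros t Ht.
      destruct (Rle_lt_dec t s); auto. exfalso; apply Hn; exists t; split; auto; lra. }
  destruct (Hcov (g T) (HG T ltac:(lra))) as [HUT|HVT].
  - destruct (HU _ HUT) as [r [Hr Hball]].
    destruct (Hc T ltac:(lra) r Hr) as [eta [Heta Hcont]].
    assert (Hnear : forall s, 0 <= s <= 1 -> Rabs (s - T) < eta -> U (g s)).
    { intros s Hs Hst. apply Hball. rewrite dist2_sym. apply Hcont; auto. }
    destruct (Req_dec T 1) as [HT|HT].
    + apply (Hdis (g 1)); auto. apply HG; lra. apply Hnear; [lra|]. rewrite HT, Rminus_diag, Rabs_R0; lra.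
    + set (T' := Rmin 1 (T + eta/2)).
      assert (HT'1 : T' <= 1) by apply Rmin_l.
      assert (HT'2 : T' <= T + eta/2) by apply Rmin_r.
      assert (HT'3 : T < T') by (unfold T'; apply Rmin_glb_lt; lra).
      assert (S T').
      { split; [lra|]. intros s Hs. destruct (Rlt_le_dec s T).
        - apply Hbelow; lra.
        - apply Hnear; [lra|]. rewrite Rabs_right; lra. }
      assert (T' <= T) by (apply Hub; auto). lra.
  - assert (HT0' : 0 < T).
    { destruct (Req_dec T 0) as [E|E]; [|lra]. exfalso. rewrite E in HVT.
      apply (Hdis (g 0)); auto. apply HG; lra. }
    destruct (HV _ HVT) as [r [Hr Hball]].
    destruct (Hc T ltac:(lra) r Hr) as [eta [Heta Hcont]].
    set (s := Rmax 0 (T - eta/2)).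
    assert (Hs1 : 0 <= s) by apply Rmax_l.
    assert (Hs2 : T - eta/2 <= s) by apply Rmax_r.
    assert (Hs3 : s < T) by (unfold s; apply Rmax_lub_lt; lra).
    apply (Hdis (g s)).
    + apply HG; lra.
    + apply Hbelow; lra.
    + apply Hball. rewrite dist2_sym. apply Hcont; [lra|]. rewrite Rabs_left; lra.
Qed.

Lemma lerp_lip x y : lipon (lerp x y) (dist2 x y) 0 1.
Proof. intros s t _ _. rewrite dist2_lerp. lra. Qed.

Lemma lerp_cont x y : cont01 (lerp x y).
Proof. eapply lip_cont01; [apply dist2_nonneg|apply lerp_lip]. Qed.

Lemma c0_in : Dc c0.
Proof. unfold Dc, c0; cbn [fst snd]. rewrite Rabs_R0. lra. Qed.

Lemma D_connected : Defs.is_connected Dc.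
Proof.
  intros [U [V [HU [HV [Hcov [Hdis [[x [Hx HUx]] [y [Hy HVy]]]]]]]]].
  destruct (Hcov c0 c0_in) as [HUc|HVc].
  - apply (path_sep Dc U V (lerp c0 y)); auto.
    + apply lerp_cont.
    + intros t Ht. rewrite lerp_sym. apply (c0P y (Pf y)); auto; [apply Pf_pos; auto|lra|lra].
    + rewrite lerp0; auto.
    + rewrite lerp1; auto.
  - apply (path_sep Dc U V (lerp x c0)); auto.
    + apply lerp_cont.
    + intros t Ht. apply (c0P x (Pf x)); auto; [apply Pf_pos; auto|lra].
    + rewrite lerp0; auto.
    + rewrite lerp1; auto.
Qed.

Lemma D_jordan : jordan_domain Dc.
Proof.
  split.
  - split; [exists c0; apply c0_in|]. split; [apply D_open|apply D_connected].
  - exists jg. split; [apply jg_jordan|]. intros z. rewrite bd_char, jg_image. tauto.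
Qed.

Lemma D_bounded : is_bounded Dc.
Proof.
  exists 2. intros [u v] [[H1 H2] H3]. cbn [fst snd] in *. unfold norm2; cbn [fst snd].
  rewrite <- (sqrt_pow2 2) by lra. apply sqrt_le_1_alt.
  pose proof (abs_lt_inv _ _ H3). assert (u^2 < 1) by nra.
  assert (v^2 < 1) by nra. lra.
Qed.


Lemma rsum_ext f g n : (forall i, (i < n)%nat -> f i = g i) -> rsum f n = rsum g n.
Proof.
  induction n; intros H; simpl; auto. rewrite IHn by (intros; apply H; lia). rewrite H by lia. reflexivity.
Qed.

Lemma rsum_le f g n : (forall i, (i < n)%nat -> f i <= g i) -> rsum f n <= rsum g n.
Proof.
  induction n; intros H; simpl; [lra|]. pose proof (IHn ltac:(intros; apply H; lia)). pose proof (H n ltac:(lia)). lra.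
Qed.

Lemma rsum_minus f g n : rsum (fun i => f i - g i) n = rsum f n - rsum g n.
Proof. induction n; simpl; [ring|]. rewrite IHn. ring. Qed.

Lemma rsum_scal c f n : rsum (fun i => c * f i) n = c * rsum f n.
Proof. induction n; simpl; [ring|]. rewrite IHn. ring. Qed.

Lemma rsum_abs f n : Rabs (rsum f n) <= rsum (fun i => Rabs (f i)) n.
Proof.
  induction n; simpl. rewrite Rabs_R0; lra.
  eapply Rle_trans; [apply Rabs_triang|]. lra.
Qed.

Lemma rsum_tele q n : rsum (fun i => q (S i) - q i) n = q n - q O.
Proof. induction n; simpl; [ring|]. rewrite IHn. ring. Qed.

Lemma partition_mono a b n p : partition a b n p -> forall i j, (i <= j <= n)%nat -> p i <= p j.
Proof.
  intros [H0 [Hn Hinc]] i j Hij. induction j.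
  - assert (i = O) by lia. subst; lra.
  - destruct (Nat.eq_dec i (S j)). subst; lra.
    pose proof (IHj ltac:(lia)). pose proof (Hinc j ltac:(lia)). lra.
Qed.

Lemma partition_range a b n p : partition a b n p -> forall i, (i <= n)%nat -> a <= p i <= b.
Proof.
  intros Hp i Hi. pose proof (partition_mono a b n p Hp) as M. destruct Hp as [H0 [Hn _]].
  split; [rewrite <- H0; apply M; lia | rewrite <- Hn; apply M; lia].
Qed.

Definition rlip (H : R -> R) M := forall s t, Rabs (H s - H t) <= M * Rabs (s - t).

Lemma rlip_continuous H M : 0 <= M -> rlip H M -> forall x, continuous H x.
Proof.
  intros HM Hl x. apply continuity_pt_filterlim.
  intros eps Heps. exists (eps / (M + 1)). split.
  - apply Rdiv_lt_0_compat; lra.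
  - intros y [_ Hy]. simpl in *. unfold R_dist in *.
    eapply Rle_lt_trans; [apply Hl|].
    apply Rle_lt_trans with (M * (eps / (M + 1))).
    + apply Rmult_le_compat_l; lra.
    + unfold Rdiv. rewrite <- Rmult_assoc. apply Rmult_lt_reg_r with (M + 1); [lra|].
      rewrite Rmult_assoc, Rinv_l by lra. nra.
Qed.

Lemma rlip_exRInt H M a b : 0 <= M -> rlip H M -> ex_RInt H a b.
Proof. intros. apply (@ex_RInt_continuous R_CompleteNormedModule). intros; eapply rlip_continuous; eauto. Qed.

Lemma RInt_rsum H M (p : nat -> R) : 0 <= M -> rlip H M ->
  forall k, RInt H (p O) (p k) = rsum (fun i => RInt H (p i) (p (S i))) k.
Proof.
  intros HM Hl k. induction k; simpl.
  - exact (@RInt_point R_CompleteNormedModule _ _).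
  - rewrite <- IHk. rewrite <- (RInt_Chasles H (p O) (p k) (p (S k))); try (eapply rlip_exRInt; eauto).
    reflexivity.
Qed.

Lemma RInt_piece H M a b xi eta : 0 <= M -> rlip H M -> a <= xi <= b -> b - a < eta ->
  Rabs (H xi * (b - a) - RInt H a b) <= M * eta * (b - a).
Proof.
  intros HM Hl Hxi Hab.
  pose proof (rlip_exRInt H M a b HM Hl) as EH.
  pose proof (@ex_RInt_const R_CompleteNormedModule a b (H xi)) as EC.
  assert (E : RInt H a b - H xi * (b - a) = RInt (fun t => H t - H xi) a b).
  { pose proof (RInt_minus _ _ _ _ EH EC) as E0.
    etransitivity; [|symmetry; exact E0].
    rewrite RInt_const. unfold minus, plus, opp, scal; simpl. unfold mult; simpl. ring. }
  rewrite <- Rabs_Ropp. replace (- (H xi * (b - a) - RInt H a b)) with (RInt H a b - H xi * (b - a)) by ring.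
  rewrite E. rewrite Rmult_comm.
  apply abs_RInt_le_const; [lra| |].
  - apply (ex_RInt_minus H (fun _ => H xi)); auto.
  - intros t Ht. eapply Rle_trans; [apply Hl|]. apply Rmult_le_compat_l; [lra|].
    apply Rabs_le. lra.
Qed.

Lemma line_int_lip w g L H M : 0 <= L -> 0 <= M -> rlip H M ->
  (forall t, 0 <= t <= 1 -> H t = w (g t)) ->
  (forall t, 0 <= t <= 1 -> arcfun g t = L * t) ->
  is_line_int w g (L * RInt H 0 1).
Proof.
  intros HL HM Hl HH Ha eps Heps.
  exists (eps / (L * M + 1)). split.
  { apply Rdiv_lt_0_compat; [lra|]. pose proof (Rmult_le_pos _ _ HL HM). lra. }
  intros n p xi Hp Hmesh Hxi.
  set (eta := eps / (L * M + 1)).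
  pose proof (partition_range _ _ _ _ Hp) as Hr.
  assert (Hsum : rsum (fun i => w (g (xi i)) * (arcfun g (p (S i)) - arcfun g (p i))) n
                 = L * rsum (fun i => H (xi i) * (p (S i) - p i)) n).
  { rewrite <- rsum_scal. apply rsum_ext. intros i Hi.
    pose proof (Hr i ltac:(lia)). pose proof (Hr (S i) ltac:(lia)). pose proof (Hxi i Hi).
    rewrite Ha, Ha by lra. rewrite HH by lra. ring. }
  destruct Hp as [Hp0 [Hpn Hinc]].
  assert (HI : RInt H 0 1 = rsum (fun i => RInt H (p i) (p (S i))) n).
  { rewrite <- Hp0, <- Hpn. eapply RInt_rsum; eauto. }
  rewrite Hsum, HI, <- Rmult_minus_distr_l, <- rsum_minus.
  rewrite Rabs_mult, (Rabs_right L) by lra.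
  assert (Hb : Rabs (rsum (fun i => H (xi i) * (p (S i) - p i) - RInt H (p i) (p (S i))) n)
               <= M * eta).
  { eapply Rle_trans; [apply rsum_abs|].
    eapply Rle_trans.
    - apply rsum_le with (g := fun i => M * eta * (p (S i) - p i)).
      intros i Hi. apply RInt_piece; auto.
    - rewrite rsum_scal, rsum_tele, Hp0, Hpn. lra. }
  assert (Heta : L * (M * eta) < eps).
  { unfold eta. rewrite <- Rmult_assoc. unfold Rdiv. rewrite <- Rmult_assoc.
    apply Rmult_lt_reg_r with (L * M + 1); [pose proof (Rmult_le_pos _ _ HL HM); lra|].
    rewrite Rmult_assoc, Rinv_l by (pose proof (Rmult_le_pos _ _ HL HM); lra).
    pose proof (Rmult_le_pos _ _ HL HM). nra. }
  eapply Rle_lt_trans; [|exact Heta]. apply Rmult_le_compat_l; auto.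
Qed.

Lemma arclen_exact g L t : 0 <= t <= 1 -> lipon g L 0 1 ->
  (exists n p, partition 0 t n p /\ L * t = rsum (fun i => dist2 (g (p i)) (g (p (S i)))) n) ->
  arclen g 0 t = Finite (L * t).
Proof.
  intros Ht Hl [n0 [p0 [Hp0 Hv0]]]. unfold arclen.
  set (E := fun v => exists n p, partition 0 t n p /\ v = rsum (fun i => dist2 (g (p i)) (g (p (S i)))) n).
  assert (Hup : forall v, E v -> v <= L * t).
  { intros v [n [p [Hp ->]]]. pose proof (partition_range _ _ _ _ Hp) as Hr.
    pose proof Hp as [Hpa [Hpb Hinc]].
    eapply Rle_trans.
    - apply rsum_le with (g := fun i => L * (p (S i) - p i)). intros i Hi.
      pose proof (Hr i ltac:(lia)). pose proof (Hr (S i) ltac:(lia)). pose proof (Hinc i Hi).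
      eapply Rle_trans; [apply Hl; lra|]. rewrite Rabs_left1 by lra. lra.
    - rewrite rsum_scal, rsum_tele, Hpa, Hpb. lra. }
  destruct (lub_props E (L * t)) as [Hf [Hub Hlst]].
  - exists (L * t). exists n0, p0. auto.
  - auto.
  - rewrite Hf. f_equal. apply Rle_antisym.
    + apply Hlst. auto.
    + apply Hub. exists n0, p0. auto.
Qed.

Definition tseg (tau : R) (x c y : pt) (t : R) : pt :=
  if Rle_dec t tau then lerp x c (t / tau) else lerp c y ((t - tau) / (1 - tau)).

Section TS.
Variables (tau L : R) (x c y : pt).
Hypothesis Htau : 0 < tau < 1.
Hypothesis HL : 0 <= L.
Hypothesis Hxc : dist2 x c = tau * L.
Hypothesis Hcy : dist2 c y = (1 - tau) * L.

Lemma tseg_1 t : t <= tau -> tseg tau x c y t = lerp x c (t / tau).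
Proof. intros; unfold tseg; destruct (Rle_dec t tau); [reflexivity|lra]. Qed.
Lemma tseg_2 t : tau <= t -> tseg tau x c y t = lerp c y ((t - tau) / (1 - tau)).
Proof.
  intros; unfold tseg; destruct (Rle_dec t tau); [|reflexivity].
  assert (t = tau) by lra. subst. replace (tau/tau) with 1 by (field; lra).
  replace ((tau - tau) / (1 - tau)) with 0 by (field; lra). rewrite lerp1, lerp0. reflexivity.
Qed.

Lemma tseg_start : tseg tau x c y 0 = x.
Proof. rewrite tseg_1 by lra. replace (0 / tau) with 0 by (field; lra). apply lerp0. Qed.
Lemma tseg_end : tseg tau x c y 1 = y.
Proof. rewrite tseg_2 by lra. replace ((1 - tau) / (1 - tau)) with 1 by (field; lra). apply lerp1. Qed.

Lemma tseg_lip : lipon (tseg tau x c y) L 0 1.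
Proof.
  apply lip_glue with tau; [lra| |].
  - intros s t Hs Ht. rewrite !tseg_1 by lra. rewrite dist2_lerp, Hxc.
    replace (s / tau - t / tau) with ((s - t) / tau) by (field; lra).
    rewrite Rabs_div, (Rabs_right tau) by lra. right. field. lra.
  - intros s t Hs Ht. rewrite !tseg_2 by lra. rewrite dist2_lerp, Hcy.
    replace ((s - tau) / (1 - tau) - (t - tau) / (1 - tau)) with ((s - t) / (1 - tau)) by (field; lra).
    rewrite Rabs_div, (Rabs_right (1 - tau)) by lra. right. field. lra.
Qed.

Lemma tseg_arclen t : 0 <= t <= 1 -> arclen (tseg tau x c y) 0 t = Finite (L * t).
Proof.
  intros Ht. apply arclen_exact; auto; [apply tseg_lip|].
  destruct (Req_dec t 0) as [->|Ht0].
  { exists O, (fun _ => 0). split; [split; [reflexivity|split; [reflexivity|intros; lia]]|]. simpl; ring. }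
  destruct (Rle_dec t tau).
  - exists 1%nat, (fun i => match i with O => 0 | _ => t end).
    split; [split; [reflexivity|split; [reflexivity|]]|].
    + intros i Hi. assert (i = O) by lia. subst. lra.
    + simpl. rewrite !tseg_1 by lra. rewrite dist2_lerp, Hxc.
      replace (0 / tau - t / tau) with (- (t / tau)) by (field; lra).
      rewrite Rabs_Ropp, Rabs_right. field; lra. apply Rle_ge, Rdiv_le_0_compat; lra.
  - exists 2%nat, (fun i => match i with O => 0 | 1%nat => tau | _ => t end).
    split; [split; [reflexivity|split; [reflexivity|]]|].
    + intros i Hi. destruct i as [|[|]]; lra || lia.
    + simpl. rewrite !tseg_1 by lra. rewrite (tseg_2 t) by lra. rewrite dist2_lerp, Hxc.
      replace (tau / tau) with 1 by (field; lra). rewrite lerp1.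
      rewrite <- (lerp0 c y) at 1. rewrite dist2_lerp, Hcy.
      replace (0 / tau - 1) with (-1) by (field; lra).
      replace (0 - (t - tau) / (1 - tau)) with (- ((t - tau) / (1 - tau))) by ring.
      rewrite (Rabs_left (-1)) by lra. rewrite Rabs_Ropp, (Rabs_right ((t - tau) / (1 - tau))).
      field; lra. apply Rle_ge, Rdiv_le_0_compat; lra.
Qed.

Lemma tseg_image t : 0 <= t <= 1 ->
  (exists l, 0 <= l <= 1 /\ tseg tau x c y t = lerp x c l) \/
  (exists l, 0 <= l <= 1 /\ tseg tau x c y t = lerp c y l).
Proof.
  intros Ht. destruct (Rle_dec t tau).
  - left. exists (t / tau). rewrite tseg_1 by lra. split; [|reflexivity].
    split; [apply Rdiv_le_0_compat; lra|]. apply Rmult_le_reg_r with tau; [lra|].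
    unfold Rdiv. rewrite Rmult_assoc, Rinv_l by lra. lra.
  - right. exists ((t - tau) / (1 - tau)). rewrite tseg_2 by lra. split; [|reflexivity].
    split; [apply Rdiv_le_0_compat; lra|]. apply Rmult_le_reg_r with (1 - tau); [lra|].
    unfold Rdiv. rewrite Rmult_assoc, Rinv_l by lra. lra.
Qed.
End TS.

(** upper bound on the quasihyperbolic metric *)
Definition clamp (t : R) := Rmax 0 (Rmin 1 t).

Lemma clamp_range t : 0 <= clamp t <= 1.
Proof.
  unfold clamp. split; [apply Rmax_l|]. apply Rmax_lub; [lra|apply Rmin_l].
Qed.
Lemma clamp_id t : 0 <= t <= 1 -> clamp t = t.
Proof. intros. unfold clamp. rewrite Rmin_right by lra. rewrite Rmax_right; lra. Qed.
Lemma clamp_lip s t : Rabs (clamp s - clamp t) <= Rabs (s - t).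
Proof.
  pose proof (Rle_abs (s - t)). pose proof (Rle_abs (- (s - t))). rewrite Rabs_Ropp in H0.
  apply Rabs_le.
  unfold clamp, Rmax, Rmin.
  destruct (Rle_dec 1 s), (Rle_dec 1 t);
  repeat match goal with |- context [Rle_dec ?a ?b] => destruct (Rle_dec a b) end; lra.
Qed.

Lemma qh_upper G x y g L k : 0 <= L -> 0 < k -> (exists b, boundary G b) ->
  g 0 = x -> g 1 = y -> lipon g L 0 1 ->
  (forall t, 0 <= t <= 1 -> arclen g 0 t = Finite (L * t)) ->
  (forall t, 0 <= t <= 1 -> G (g t) /\ k <= delta G (g t)) ->
  Rbar_le (qh_metric G x y) (Finite (L / k)).
Proof.
  intros HL Hk Hb Hg0 Hg1 Hl Ha HG.
  set (H := fun t => / delta G (g (clamp t))).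
  assert (Hd : forall t, k <= delta G (g (clamp t))) by (intros; apply HG, clamp_range).
  assert (HlipH : rlip H (L / (k * k))).
  { intros s t. unfold H.
    pose proof (Hd s). pose proof (Hd t).
    set (a := delta G (g (clamp s))) in *. set (b := delta G (g (clamp t))) in *.
    replace (/ a - / b) with ((b - a) / (a * b)) by (field; lra).
    rewrite Rabs_div, (Rabs_right (a * b)) by nra.
    assert (Rabs (b - a) <= L * Rabs (s - t)).
    { unfold a, b. rewrite <- Rabs_Ropp. replace (- (delta G (g (clamp t)) - delta G (g (clamp s))))
        with (delta G (g (clamp s)) - delta G (g (clamp t))) by ring.
      eapply Rle_trans; [apply delta_lip_abs; auto|].
      eapply Rle_trans; [apply Hl; apply clamp_range|].
      apply Rmult_le_compat_l; auto. apply clamp_lip. }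
    unfold Rdiv. apply Rle_trans with (Rabs (b - a) * / (k * k)).
    - apply Rmult_le_compat_l; [apply Rabs_pos|]. apply Rinv_le_contravar; nra.
    - pose proof (Rabs_pos (b - a)). pose proof (Rinv_0_lt_compat (k * k) ltac:(nra)).
      replace (L * / (k * k) * Rabs (s - t)) with (L * Rabs (s - t) * / (k * k)) by ring.
      apply Rmult_le_compat_r; lra. }
  assert (HM : 0 <= L / (k * k)) by (apply Rdiv_le_0_compat; nra).
  assert (Hint : is_line_int (fun z => / delta G z) g (L * RInt H 0 1)).
  { apply line_int_lip with (M := L / (k * k)); auto.
    - intros t Ht. unfold H. rewrite clamp_id; auto.
    - intros t Ht. unfold arcfun. rewrite Ha; auto. }
  assert (Hbound : L * RInt H 0 1 <= L / k).
  { assert (Rabs (RInt H 0 1) <= (1 - 0) * / k).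
    { apply abs_RInt_le_const; [lra|eapply rlip_exRInt; eauto|].
      intros t Ht. unfold H. pose proof (Hd t). rewrite Rabs_right.
      - apply Rinv_le_contravar; lra.
      - apply Rle_ge, Rlt_le, Rinv_0_lt_compat; lra. }
    pose proof (Rle_abs (RInt H 0 1)). unfold Rdiv.
    apply Rmult_le_compat_l; auto. lra. }
  apply Rbar_le_trans with (Finite (L * RInt H 0 1)); [|exact Hbound].
  unfold qh_metric. destruct (Glb_Rbar_correct
     (fun v => exists g0, path_in G x y g0 /\ rectifiable g0 /\
               is_line_int (fun z => / delta G z) g0 v)) as [Hlb _].
  apply Hlb. exists g. split; [|split].
  - split; [exact (lip_cont01 g L HL Hl)|]. split; [auto|]. split; [auto|]. intros t Ht; apply HG; auto.
  - unfold rectifiable. rewrite (Ha 1) by lra. reflexivity.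
  - exact Hint.
Qed.


Definition phi0 (t : R) : R := (3 * t + 1)^2 - 1.

Lemma phi0_homeo : homeo0 phi0.
Proof.
  unfold phi0. split; [|split; [|split]].
  - ring.
  - intros s t Hs Hst. nra.
  - intros t Ht eps Heps. exists (Rmin 1 (eps / (3 * (6 * t + 5)))). split.
    + apply Rmin_glb_lt; [lra|]. apply Rdiv_lt_0_compat; lra.
    + intros s Hs Hst.
      assert (H1 : Rabs (s - t) < 1) by (eapply Rlt_le_trans; [exact Hst|apply Rmin_l]).
      assert (H2 : Rabs (s - t) < eps / (3 * (6 * t + 5))) by (eapply Rlt_le_trans; [exact Hst|apply Rmin_r]).
      replace ((3 * s + 1) ^ 2 - 1 - ((3 * t + 1) ^ 2 - 1)) with (3 * (s - t) * (3 * (s - t) + 6 * t + 2)) by ring.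
      rewrite !Rabs_mult, (Rabs_right 3) by lra.
      assert (Rabs (3 * (s - t) + 6 * t + 2) <= 6 * t + 5).
      { apply Rabs_le. pose proof (abs_lt_inv _ _ H1). lra. }
      assert (3 * (6 * t + 5) * Rabs (s - t) < eps).
      { apply Rmult_lt_compat_l with (r := 3 * (6 * t + 5)) in H2; [|lra].
        replace (3 * (6 * t + 5) * (eps / (3 * (6 * t + 5)))) with eps in H2 by (field; lra).
        lra. }
      pose proof (Rabs_pos (s - t)).
      assert (3 * Rabs (s - t) * Rabs (3 * (s - t) + 6 * t + 2) <= 3 * Rabs (s - t) * (6 * t + 5))
        by (apply Rmult_le_compat_l; lra).
      lra.
  - intros y Hy. exists ((sqrt (1 + y) - 1) / 3). split.
    + assert (1 <= sqrt (1 + y)). { rewrite <- sqrt_1 at 1. apply sqrt_le_1_alt. lra. } apply Rdiv_le_0_compat; lra.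
    + replace (3 * ((sqrt (1 + y) - 1) / 3) + 1) with (sqrt (1 + y)) by field.
      rewrite pow2_sqrt by lra. ring.
Qed.

Lemma lerp_half_1 x y l : lerp x (lerp x y (1/2)) l = lerp x y (l / 2).
Proof. unfold lerp; cbn [fst snd]; f_equal; field. Qed.
Lemma lerp_half_2 x y l : lerp (lerp x y (1/2)) y l = lerp x y (1/2 + l / 2).
Proof. unfold lerp; cbn [fst snd]; f_equal; field. Qed.

Lemma qh_D_tseg x c y tau L m : 0 < tau < 1 -> 0 <= L -> 0 < m ->
  dist2 x c = tau * L -> dist2 c y = (1 - tau) * L ->
  (forall l, 0 <= l <= 1 -> Dc (lerp x c l) /\ m / 2 <= Pf (lerp x c l)) ->
  (forall l, 0 <= l <= 1 -> Dc (lerp c y l) /\ m / 2 <= Pf (lerp c y l)) ->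
  Rbar_le (qh_metric Dc x y) (Finite (L / (m / 6))).
Proof.
  intros Ht HL Hm Hxc Hcy H1 H2.
  apply qh_upper with (g := tseg tau x c y); auto.
  - lra.
  - apply bd_nonempty.
  - apply tseg_start; auto.
  - apply tseg_end; auto.
  - apply tseg_lip; auto.
  - intros t Htt. apply tseg_arclen; auto.
  - intros t Htt. destruct (tseg_image tau x c y Ht t Htt) as [[l [Hl ->]]|[l [Hl ->]]].
    + destruct (H1 l Hl) as [HD HP]. split; auto. pose proof (delta_D_lower _ HD). lra.
    + destruct (H2 l Hl) as [HD HP]. split; auto. pose proof (delta_D_lower _ HD). lra.
Qed.

Lemma qh_D_seg x y m : 0 < m ->
  (forall l, 0 <= l <= 1 -> Dc (lerp x y l) /\ m / 2 <= Pf (lerp x y l)) ->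
  Rbar_le (qh_metric Dc x y) (Finite (dist2 x y / (m / 6))).
Proof.
  intros Hm H.
  apply qh_D_tseg with (c := lerp x y (1/2)) (tau := 1/2); auto.
  - lra.
  - apply dist2_nonneg.
  - rewrite <- (lerp0 x y) at 1. rewrite dist2_lerp. replace (0 - 1/2) with (- (1/2)) by ring.
    rewrite Rabs_Ropp, Rabs_right by lra. ring.
  - rewrite <- (lerp1 x y) at 2. rewrite dist2_lerp. replace (1/2 - 1) with (- (1/2)) by field.
    rewrite Rabs_Ropp, Rabs_right by lra. field.
  - intros l Hl. rewrite lerp_half_1. apply H. split; lra.
  - intros l Hl. rewrite lerp_half_2. apply H. split; lra.
Qed.

Lemma dist_c0_lt z : Dc z -> dist2 z c0 < 3/2.
Proof.
  intros [[H1 H2] H3]. eapply Rle_lt_trans; [apply dist2_le_sum|].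
  destruct z as [u v]; unfold c0; cbn [fst snd] in *.
  pose proof (abs_lt_inv _ _ H3). assert (u^2 < 1) by nra.
  assert (Rabs (u - 1/2) < 1/2) by (apply Rabs_def1; lra).
  assert (Rabs (v - 0) < 1) by (apply Rabs_def1; lra). lra.
Qed.

Theorem D_uniform : phi_uniform Dc phi0.
Proof.
  intros x y Hx Hy.
  pose proof (delta_D_lower x Hx). pose proof (delta_D_upper x Hx).
  pose proof (delta_D_lower y Hy). pose proof (delta_D_upper y Hy).
  pose proof (Pf_pos x Hx). pose proof (Pf_pos y Hy).
  set (m := Rmin (delta Dc x) (delta Dc y)).
  assert (Hm : 0 < m) by (unfold m; apply Rmin_glb_lt; lra).
  assert (Hmx : m <= Pf x) by (unfold m; pose proof (Rmin_l (delta Dc x) (delta Dc y)); lra).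
  assert (Hmy : m <= Pf y) by (unfold m; pose proof (Rmin_r (delta Dc x) (delta Dc y)); lra).
  clearbody m.
  set (d := dist2 x y).
  assert (Hd0 : 0 <= d) by apply dist2_nonneg.
  assert (Hseg_bound : Rbar_le (Finite (d / (m / 6))) (Finite (phi0 (d / m)))).
  { simpl. unfold phi0. replace (d / (m / 6)) with (6 * (d / m)) by (field; lra).
    assert (0 <= d / m) by (apply Rdiv_le_0_compat; lra). nra. }
  destruct (Rle_lt_dec (d ^ 2) (2 * m)) as [HA|HB].
  - eapply Rbar_le_trans; [|exact Hseg_bound].
    apply qh_D_seg; auto. intros l Hl. apply segP; auto.
  - destruct (classic (x = c0)) as [Ex|Ex].
    { eapply Rbar_le_trans; [|exact Hseg_bound].
      apply qh_D_seg; auto. intros l Hl. rewrite lerp_sym. rewrite Ex.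
      rewrite Ex in Hx. apply (c0P y m (1 - l)); auto. lra. }
    destruct (classic (y = c0)) as [Ey|Ey].
    { eapply Rbar_le_trans; [|exact Hseg_bound].
      apply qh_D_seg; auto. intros l Hl. rewrite Ey. apply (c0P x m l); auto. }
    set (d1 := dist2 x c0). set (d2 := dist2 c0 y).
    assert (Hd1 : 0 < d1).
    { unfold d1. destruct (Rle_lt_dec (dist2 x c0) 0); [|lra]. exfalso. apply Ex.
      pose proof (dist2_fst x c0). pose proof (dist2_snd x c0).
      pose proof (Rabs_pos (fst x - fst c0)). pose proof (Rabs_pos (snd x - snd c0)).
      destruct x as [a b]. unfold c0 in *; cbn [fst snd] in *.
      assert (E1 : Rabs (a - 1/2) = 0) by lra. assert (E2 : Rabs (b - 0) = 0) by lra.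
      apply Rabs_eq_0 in E1. apply Rabs_eq_0 in E2. f_equal; lra. }
    assert (Hd2 : 0 < d2).
    { unfold d2. destruct (Rle_lt_dec (dist2 c0 y) 0); [|lra]. exfalso. apply Ey.
      pose proof (dist2_fst c0 y). pose proof (dist2_snd c0 y).
      pose proof (Rabs_pos (fst c0 - fst y)). pose proof (Rabs_pos (snd c0 - snd y)).
      destruct y as [a b]. unfold c0 in *; cbn [fst snd] in *.
      assert (E1 : Rabs (1/2 - a) = 0) by lra. assert (E2 : Rabs (0 - b) = 0) by lra.
      apply Rabs_eq_0 in E1. apply Rabs_eq_0 in E2. f_equal; lra. }
    assert (HL3 : d1 + d2 < 3).
    { unfold d1, d2. rewrite (dist2_sym c0 y). pose proof (dist_c0_lt x Hx). pose proof (dist_c0_lt y Hy). lra. }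
    eapply Rbar_le_trans.
    + apply qh_D_tseg with (c := c0) (tau := d1 / (d1 + d2)) (L := d1 + d2) (m := m); auto.
      * split; [apply Rdiv_lt_0_compat; lra|]. apply Rmult_lt_reg_r with (d1 + d2); [lra|].
        unfold Rdiv. rewrite Rmult_assoc, Rinv_l by lra. lra.
      * lra.
      * fold d1. field. lra.
      * fold d2. field. lra.
      * intros l Hl. apply (c0P x m l); auto.
      * intros l Hl. rewrite lerp_sym. apply (c0P y m (1 - l)); auto. lra.
    + simpl. unfold phi0.
      assert (Hq : 18 / m < 9 * (d / m) ^ 2).
      { replace (9 * (d / m) ^ 2) with (9 * d ^ 2 / (m * m)) by (field; lra).
        replace (18 / m) with (18 * m / (m * m)) by (field; lra).
        unfold Rdiv. apply Rmult_lt_compat_r; [apply Rinv_0_lt_compat; nra|lra]. }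
      assert ((d1 + d2) / (m / 6) <= 18 / m).
      { replace ((d1 + d2) / (m / 6)) with (6 * (d1 + d2) / m) by (field; lra).
        unfold Rdiv. apply Rmult_le_compat_r; [apply Rlt_le, Rinv_0_lt_compat; lra|lra]. }
      assert (0 <= d / m) by (apply Rdiv_le_0_compat; lra). nra.
Qed.


Lemma rsum_S f n : rsum f (S n) = rsum f n + f n.
Proof. reflexivity. Qed.

Definition AS (g : R -> pt) (t : R) := fun v => exists n p, partition 0 t n p /\
  v = rsum (fun i => dist2 (g (p i)) (g (p (S i)))) n.

Lemma AS_extend g a b v : a < b -> AS g a v -> AS g b (v + dist2 (g a) (g b)).
Proof.
  intros Hab [n [p [[H0 [Hn Hinc]] ->]]].
  exists (S n), (fun i => if le_lt_dec i n then p i else b). split; [split; [|split]|].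
  - destruct (le_lt_dec 0 n); [auto|lia].
  - destruct (le_lt_dec (S n) n); [lia|auto].
  - intros i Hi. destruct (le_lt_dec i n); [|lia].
    destruct (le_lt_dec (S i) n).
    + apply Hinc; lia.
    + assert (i = n) by lia. subst. lra.
  - rewrite rsum_S. cbv beta. destruct (le_lt_dec n n); [|lia]. destruct (le_lt_dec (S n) n); [lia|].
    f_equal; [|rewrite Hn; reflexivity].
    apply rsum_ext. intros i Hi. destruct (le_lt_dec i n); [|lia]. destruct (le_lt_dec (S i) n); [|lia].
    reflexivity.
Qed.

Lemma AS_nonempty g t : 0 <= t -> exists v, AS g t v.
Proof.
  intros Ht. destruct (Req_dec t 0) as [->|Ht0].
  - exists 0, O, (fun _ => 0). split; [split; [reflexivity|split; [reflexivity|intros; lia]]|]. reflexivity.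
  - exists (dist2 (g 0) (g t)), 1%nat, (fun i => match i with O => 0 | _ => t end).
    split; [split; [reflexivity|split; [reflexivity|]]|].
    + intros i Hi. assert (i = O) by lia. subst. lra.
    + simpl. ring.
Qed.

Lemma AS_bounded g t : rectifiable g -> 0 <= t <= 1 -> forall v, AS g t v -> v <= real (arclen g 0 1).
Proof.
  intros Hr Ht v Hv.
  assert (H1 : forall w, AS g 1 w -> w <= real (arclen g 0 1)).
  { intros w Hw. unfold rectifiable, is_finite in Hr. pose proof (Lub_Rbar_correct (AS g 1)) as [Hub _].
    specialize (Hub w Hw). unfold arclen in *. fold (AS g 1) in *. rewrite <- Hr in Hub. exact Hub. }
  destruct (Req_dec t 1) as [->|Ht1]; auto.
  pose proof (H1 _ (AS_extend g t 1 v ltac:(lra) Hv)). pose proof (dist2_nonneg (g t) (g 1)). lra.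
Qed.

Lemma arcfun_super g a b : rectifiable g -> 0 <= a -> a < b -> b <= 1 ->
  arcfun g a + dist2 (g a) (g b) <= arcfun g b.
Proof.
  intros Hr Ha Hab Hb.
  destruct (lub_props (AS g b) (real (arclen g 0 1))) as [_ [Hubb _]].
  { apply AS_nonempty; lra. }
  { apply AS_bounded; auto; lra. }
  destruct (lub_props (AS g a) (real (arclen g 0 1))) as [_ [_ Hlsta]].
  { apply AS_nonempty; lra. }
  { apply AS_bounded; auto; lra. }
  assert (real (Lub_Rbar (AS g a)) <= real (Lub_Rbar (AS g b)) - dist2 (g a) (g b)).
  { apply Hlsta. intros v Hv. pose proof (Hubb _ (AS_extend g a b v Hab Hv)). lra. }
  unfold arcfun, arclen. fold (AS g a). fold (AS g b). lra.
Qed.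

(** lower bound for line integrals *)
Lemma ln_step a r r' d : 0 < a -> 0 <= r -> 0 <= r' -> r' <= r + d -> 0 <= d ->
  ln (a + r') - ln (a + r) <= d / (a + r).
Proof.
  intros Ha Hr Hr' Hd Hd0.
  destruct (Rle_lt_dec r' r).
  - assert (ln (a + r') <= ln (a + r)) by (apply ln_le; lra).
    assert (0 <= d / (a + r)) by (apply Rdiv_le_0_compat; lra). lra.
  - rewrite <- ln_div by lra.
    replace ((a + r') / (a + r)) with (1 + (r' - r) / (a + r)) by (field; lra).
    apply Rle_trans with (ln (exp ((r' - r) / (a + r)))).
    + apply ln_le.
      * apply Rplus_lt_le_0_compat; [lra|]. apply Rdiv_le_0_compat; lra.
      * apply exp_ineq1_le.
    + rewrite ln_exp. unfold Rdiv. apply Rmult_le_compat_r; [apply Rlt_le, Rinv_0_lt_compat; lra|lra].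
Qed.

Lemma rsum_tail f N n : (N <= n)%nat -> (forall i, (N <= i < n)%nat -> 0 <= f i) -> rsum f N <= rsum f n.
Proof.
  intros HNn Hf. induction n.
  - assert (N = O) by lia. subst. lra.
  - destruct (Nat.eq_dec N (S n)). subst; lra.
    simpl. pose proof (IHn ltac:(lia) ltac:(intros; apply Hf; lia)). pose proof (Hf n ltac:(lia)). lra.
Qed.

Lemma line_int_lower w g I x a t0 : rectifiable g -> is_line_int w g I -> 0 < t0 < 1 -> 0 < a -> g 0 = x ->
  (forall t, 0 <= t <= 1 -> 0 < w (g t) /\ / (a + dist2 (g t) x) <= w (g t)) ->
  ln (a + dist2 (g t0) x) - ln a <= I.
Proof.
  intros Hr Hint Ht0 Ha Hg0 Hw.
  apply Rnot_lt_le. intros Hlt.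
  set (eps := ln (a + dist2 (g t0) x) - ln a - I).
  destruct (Hint eps ltac:(unfold eps; lra)) as [eta [Heta Hconv]].
  destruct (INR_archimed eta 1 Heta) as [N HN].
  assert (HN0 : (0 < N)%nat). { destruct N; [simpl in HN; lra|lia]. }
  pose proof (lt_0_INR N HN0) as HNr.
  set (p := fun i => if le_lt_dec i N then t0 * INR i / INR N
                     else t0 + (1 - t0) * (INR i - INR N) / INR N).
  assert (HpN : p N = t0).
  { unfold p. destruct (le_lt_dec N N); [|lia]. field. lra. }
  assert (Hp0 : p O = 0).
  { unfold p. destruct (le_lt_dec 0 N); [|lia]. simpl. field. lra. }
  assert (Hstep : forall i, (i < N + N)%nat -> 0 < p (S i) - p i <= / INR N).
  { intros i Hi. unfold p. rewrite S_INR.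
    destruct (le_lt_dec (S i) N), (le_lt_dec i N); try lia.
    - replace (t0 * (INR i + 1) / INR N - t0 * INR i / INR N) with (t0 / INR N) by (field; lra).
      split; [apply Rdiv_lt_0_compat; lra|]. unfold Rdiv. rewrite <- (Rmult_1_l (/ INR N)) at 2.
      apply Rmult_le_compat_r; [apply Rlt_le, Rinv_0_lt_compat; lra|lra].
    - assert (i = N) by lia. subst i.
      replace (t0 + (1 - t0) * (INR N + 1 - INR N) / INR N - t0 * INR N / INR N) with ((1 - t0) / INR N)
        by (field; lra).
      split; [apply Rdiv_lt_0_compat; lra|]. unfold Rdiv. rewrite <- (Rmult_1_l (/ INR N)) at 2.
      apply Rmult_le_compat_r; [apply Rlt_le, Rinv_0_lt_compat; lra|lra].
    - replace (t0 + (1 - t0) * (INR i + 1 - INR N) / INR N - (t0 + (1 - t0) * (INR i - INR N) / INR N))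
        with ((1 - t0) / INR N) by (field; lra).
      split; [apply Rdiv_lt_0_compat; lra|]. unfold Rdiv. rewrite <- (Rmult_1_l (/ INR N)) at 2.
      apply Rmult_le_compat_r; [apply Rlt_le, Rinv_0_lt_compat; lra|lra]. }
  assert (Hpart : partition 0 1 (N + N) p).
  { split; [auto|split].
    - unfold p. destruct (le_lt_dec (N + N) N); [lia|]. rewrite plus_INR. field. lra.
    - intros i Hi. pose proof (Hstep i Hi). lra. }
  assert (Hinv : / INR N < eta).
  { apply Rmult_lt_reg_r with (INR N); [lra|]. rewrite Rinv_l by lra. lra. }
  specialize (Hconv (N + N)%nat p p Hpart).
  assert (Hc : Rabs (rsum (fun i => w (g (p i)) * (arcfun g (p (S i)) - arcfun g (p i))) (N + N) - I) < eps).
  { apply Hconv.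
    - intros i Hi. pose proof (Hstep i Hi). lra.
    - intros i Hi. pose proof (Hstep i Hi). lra. }
  pose proof (partition_range _ _ _ _ Hpart) as Hrng.
  set (f := fun i => w (g (p i)) * (arcfun g (p (S i)) - arcfun g (p i))) in *.
  assert (Hf : forall i, (i < N + N)%nat ->
     0 <= f i /\ ln (a + dist2 (g (p (S i))) x) - ln (a + dist2 (g (p i)) x) <= f i).
  { intros i Hi. pose proof (Hrng i ltac:(lia)). pose proof (Hrng (S i) ltac:(lia)). pose proof (Hstep i Hi).
    pose proof (arcfun_super g (p i) (p (S i)) Hr ltac:(lra) ltac:(lra) ltac:(lra)).
    destruct (Hw (p i) ltac:(lra)) as [Hwp Hwl].
    pose proof (dist2_nonneg (g (p i)) (g (p (S i)))).
    unfold f. split.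
    - apply Rmult_le_pos; lra.
    - eapply Rle_trans; [apply (ln_step a (dist2 (g (p i)) x) (dist2 (g (p (S i))) x) (dist2 (g (p i)) (g (p (S i)))))|].
      + auto.
      + apply dist2_nonneg.
      + apply dist2_nonneg.
      + pose proof (dist2_tri (g (p (S i))) (g (p i)) x) as T. rewrite (dist2_sym (g (p (S i))) (g (p i))) in T. lra.
      + apply dist2_nonneg.
      + pose proof (dist2_nonneg (g (p i)) x).
        unfold Rdiv. rewrite Rmult_comm.
        apply Rle_trans with (w (g (p i)) * dist2 (g (p i)) (g (p (S i)))).
        * apply Rmult_le_compat_r; auto.
        * apply Rmult_le_compat_l; lra. }
  assert (Hsum : ln (a + dist2 (g t0) x) - ln a <= rsum f (N + N)).
  { eapply Rle_trans; [|apply (rsum_tail f N); [lia|intros i Hi; apply Hf; lia]].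
    eapply Rle_trans; [|apply rsum_le with (f := fun i => ln (a + dist2 (g (p (S i))) x) - ln (a + dist2 (g (p i)) x)); intros i Hi; apply Hf; lia].
    rewrite (rsum_tele (fun i => ln (a + dist2 (g (p i)) x)) N). rewrite HpN, Hp0, Hg0, dist2_refl, Rplus_0_r.
    lra. }
  pose proof (Rle_abs (rsum f (N + N) - I)). pose proof (Rle_abs (- (rsum f (N + N) - I))).
  rewrite Rabs_Ropp in H0. unfold eps in *. lra.
Qed.

Lemma qh_lower G x y L :
  (forall g v, path_in G x y g -> rectifiable g -> is_line_int (fun z => / delta G z) g v -> L <= v) ->
  Rbar_le (Finite L) (qh_metric G x y).
Proof.
  intros H. unfold qh_metric.
  destruct (Glb_Rbar_correct (fun v => exists g, path_in G x y g /\ rectifiable g /\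
              is_line_int (fun z => / delta G z) g v)) as [_ Hgr].
  apply Hgr. intros v [g [Hp [Hr Hi]]]. simpl. eapply H; eauto.
Qed.


Definition Ec := ext_closure Dc.

Lemma E_ball z : Ec z -> exists r, 0 < r /\ forall y, dist2 z y < r -> Ec y.
Proof.
  intros Hz. unfold Ec, ext_closure, closure in Hz.
  apply not_all_ex_not in Hz. destruct Hz as [r Hr].
  apply imply_to_and in Hr. destruct Hr as [Hr Hn].
  exists (r / 2). split; [lra|]. intros y Hy Hcy.
  destruct (Hcy (r / 2) ltac:(lra)) as [w [Hw Hyw]]. apply Hn. exists w. split; auto.
  pose proof (dist2_tri z y w). lra.
Qed.

Lemma notK_E z : ~ Kc z -> Ec z.
Proof. intros H Hc. apply H. apply closure_K; auto. Qed.

Lemma bd_E s : 0 < s < 1 -> boundary Ec (s, s^2).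
Proof.
  intros Hs. split.
  - intros r Hr. exists (s, s^2 + r/2). split.
    + apply notK_E. intros [_ HK]. cbn [fst snd] in HK. rewrite Rabs_right in HK by nra. lra.
    + eapply Rle_lt_trans; [apply dist2_le_sum|]. cbn [fst snd].
      replace (s - s) with 0 by ring. replace (s ^ 2 - (s ^ 2 + r / 2)) with (- (r/2)) by ring.
      rewrite Rabs_R0, Rabs_Ropp, Rabs_right; lra.
  - intros [r [Hr Hi]]. apply (Hi (s, s^2)).
    + rewrite dist2_refl; lra.
    + apply C_closure. left. exists s. split; [lra|reflexivity].
Qed.

Lemma E_delta_pos z : Ec z -> (exists b, boundary Ec b) -> 0 < delta Ec z.
Proof.
  intros Hz Hb. destruct (E_ball z Hz) as [r [Hr Hball]].
  pose proof (delta_ge_ball Ec z r Hb Hball). lra.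
Qed.

Lemma cont01_snd_clamp g : cont01 g -> continuity (fun t => - snd (g (clamp t))).
Proof.
  intros Hc t. unfold continuity_pt, continue_in, limit1_in, limit_in. simpl. unfold R_dist.
  intros eps Heps. destruct (Hc (clamp t) (clamp_range t) eps Heps) as [eta [Heta H]].
  exists eta. split; [lra|]. intros t' [_ Ht'].
  pose proof (H (clamp t') (clamp_range t') ltac:(eapply Rle_lt_trans; [apply clamp_lip|exact Ht'])) as Hd.
  pose proof (dist2_snd (g (clamp t')) (g (clamp t))).
  replace (- snd (g (clamp t')) - - snd (g (clamp t))) with (- (snd (g (clamp t')) - snd (g (clamp t)))) by ring.
  rewrite Rabs_Ropp. lra.
Qed.

Theorem E_not_uniform : ~ (exists psi, homeo0 psi /\ phi_uniform (ext_closure Dc) psi).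
Proof.
  intros [psi [[H0 [Hinc _]] Hu]].
  set (K := psi 8).
  set (s := / (4 + exp (Rabs K + 1))).
  assert (Hex : 0 < exp (Rabs K + 1)) by apply exp_pos.
  assert (Hs0 : 0 < s) by (unfold s; apply Rinv_0_lt_compat; lra).
  assert (Hs1 : s < 1/4).
  { unfold s. replace (1/4) with (/ 4) by field.
    apply Rinv_lt_contravar; [apply Rmult_lt_0_compat; lra|lra]. }
  assert (Hinvs : / s = 4 + exp (Rabs K + 1)) by (unfold s; rewrite Rinv_inv; reflexivity).
  set (x := (s, 2 * s^2)). set (y := (s, - (2 * s^2))). set (b := (s, s^2)).
  assert (Hb : boundary Ec b) by (apply bd_E; lra).
  assert (Hbne : exists b, boundary Ec b) by (exists b; auto).
  assert (Hxball : forall z, dist2 x z < s^2 / 2 -> Ec z).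
  { intros [u v] Hz. apply notK_E. intros [_ HK].
    destruct (dist2_lt_coord _ _ _ Hz) as [Hu1 Hv1]. unfold x in *; cbn [fst snd] in *.
    apply abs_lt_inv in Hu1. apply abs_lt_inv in Hv1.
    assert (Hv : 3/2 * s^2 < v) by lra.
    assert (0 < u) by nra.
    assert (u < s + s^2/2) by lra.
    assert (u^2 < 3/2 * s^2).
    { assert (u^2 < (s + s^2/2)^2) by (assert (0 < s + s^2/2) by nra; nra).
      assert ((1 + s/2)^2 < 3/2) by nra.
      replace ((s + s^2/2)^2) with (s^2 * (1 + s/2)^2) in * by field.
      assert (0 < s^2) by nra. nra. }
    rewrite Rabs_right in HK by nra. lra. }
  assert (Hyball : forall z, dist2 y z < s^2 / 2 -> Ec z).
  { intros [u v] Hz. apply notK_E. intros [_ HK].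
    destruct (dist2_lt_coord _ _ _ Hz) as [Hu1 Hv1]. unfold y in *; cbn [fst snd] in *.
    apply abs_lt_inv in Hu1. apply abs_lt_inv in Hv1.
    assert (Hv : v < - (3/2 * s^2)) by lra.
    assert (0 < u) by nra.
    assert (u < s + s^2/2) by lra.
    assert (u^2 < 3/2 * s^2).
    { assert (u^2 < (s + s^2/2)^2) by (assert (0 < s + s^2/2) by nra; nra).
      assert ((1 + s/2)^2 < 3/2) by nra.
      replace ((s + s^2/2)^2) with (s^2 * (1 + s/2)^2) in * by field.
      assert (0 < s^2) by nra. nra. }
    rewrite Rabs_left in HK by nra. lra. }
  assert (Hx : Ec x) by (apply Hxball; rewrite dist2_refl; nra).
  assert (Hy : Ec y) by (apply Hyball; rewrite dist2_refl; nra).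
  assert (Hdx : s^2 / 2 <= delta Ec x) by (apply delta_ge_ball; auto).
  assert (Hdy : s^2 / 2 <= delta Ec y) by (apply delta_ge_ball; auto).
  assert (Hxy : dist2 x y = 4 * s^2).
  { unfold dist2, x, y; cbn [fst snd]. replace ((s - s)^2 + (2 * s^2 - - (2 * s^2))^2) with ((4 * s^2)^2) by ring.
    apply sqrt_pow2. nra. }
  assert (Hxb : dist2 x b = s^2).
  { unfold dist2, x, b; cbn [fst snd]. replace ((s - s)^2 + (2 * s^2 - s^2)^2) with ((s^2)^2) by ring.
    apply sqrt_pow2. nra. }
  set (m := Rmin (delta Ec x) (delta Ec y)).
  assert (Hm : s^2 / 2 <= m) by (unfold m; apply Rmin_glb; auto).
  assert (Hratio : 0 <= dist2 x y / m <= 8).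
  { rewrite Hxy. split; [apply Rdiv_le_0_compat; nra|].
    apply Rmult_le_reg_r with m; [nra|]. unfold Rdiv. rewrite Rmult_assoc, Rinv_l by nra. nra. }
  assert (Hpsi : psi (dist2 x y / m) <= K).
  { unfold K. destruct (Req_dec (dist2 x y / m) 8) as [->|Hne]; [lra|].
    apply Rlt_le, Hinc; lra. }
  set (Lb := ln (s^2 + s) - ln (s^2)).
  assert (HLb : K < Lb).
  { unfold Lb. rewrite <- ln_div by nra.
    replace ((s^2 + s) / s^2) with (1 + / s) by (field; lra). rewrite Hinvs.
    rewrite <- (ln_exp K) at 1. apply ln_increasing; [apply exp_pos|].
    assert (exp K <= exp (Rabs K + 1)).
    { destruct (Req_dec K (Rabs K + 1)); [rewrite <- H; lra|]. apply Rlt_le, exp_increasing.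
      pose proof (Rle_abs K). lra. }
    lra. }
  assert (Hlow : Rbar_le (Finite Lb) (qh_metric (ext_closure Dc) x y)).
  { apply qh_lower. intros g v [Hgc [Hg0 [Hg1 HgE]]] Hr Hint.
    destruct (IVT (fun t => - snd (g (clamp t))) 0 1 (cont01_snd_clamp g Hgc) ltac:(lra)) as [t0 [Ht0 Hz]].
    { rewrite clamp_id by lra. rewrite Hg0. unfold x; cbn [fst snd]. nra. }
    { rewrite clamp_id by lra. rewrite Hg1. unfold y; cbn [fst snd]. nra. }
    rewrite clamp_id in Hz by lra.
    assert (Ht0' : 0 < t0 < 1).
    { assert (t0 <> 0).
      { intro E. rewrite E, Hg0 in Hz. unfold x in Hz. cbn [fst snd] in Hz. nra. }
      assert (t0 <> 1).
      { intro E. rewrite E, Hg1 in Hz. unfold y in Hz. cbn [fst snd] in Hz. nra. }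
      lra. }
    assert (Hc : Ec (g t0)) by (apply HgE; lra).
    assert (Hfar : s <= dist2 (g t0) x).
    { destruct (g t0) as [u w] eqn:Eg. cbn [snd] in Hz. assert (w = 0) by lra. subst w.
      assert (Hu2 : u < 0 \/ 1 < u).
      { destruct (Rlt_le_dec u 0); [left; auto|]. destruct (Rlt_le_dec 1 u); [right; auto|].
        exfalso. apply Hc. destruct (Req_dec u 0) as [->|Hu0].
        - apply C_closure. left. exists 0. split; [lra|]. f_equal; ring.
        - destruct (Req_dec u 1) as [->|Hu1].
          + apply C_closure. right; right. exists 0. split; [lra|reflexivity].
          + apply D_closure. unfold Dc; cbn [fst snd]. rewrite Rabs_R0. split; [lra|nra]. }
      eapply Rle_trans; [|apply dist2_fst]. unfold x; cbn [fst snd].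
      destruct Hu2; [rewrite Rabs_left by lra | rewrite Rabs_right by lra]; lra. }
    pose proof (line_int_lower (fun z => / delta Ec z) g v x (s^2) t0 Hr Hint Ht0' ltac:(nra) Hg0) as Hli.
    assert (Hw : forall t, 0 <= t <= 1 ->
       0 < / delta Ec (g t) /\ / (s ^ 2 + dist2 (g t) x) <= / delta Ec (g t)).
    { intros t Ht. pose proof (E_delta_pos (g t) (HgE t Ht) Hbne).
      split; [apply Rinv_0_lt_compat; auto|]. apply Rinv_le_contravar; auto.
      pose proof (delta_le Ec (g t) b Hb). pose proof (dist2_tri (g t) x b). lra. }
    specialize (Hli Hw).
    unfold Lb. eapply Rle_trans; [|exact Hli].
    apply Rplus_le_compat_r. apply ln_le; [nra|lra]. }
  specialize (Hu x y Hx Hy). fold m in Hu.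
  pose proof (Rbar_le_trans _ _ _ Hlow Hu) as Hfin. simpl in Hfin.
  assert (Hfin2 : Lb <= psi (dist2 x y / m)) by exact Hfin. lra.
Qed.


Theorem proposition4p1 :
  exists D : pt -> Prop,
    is_bounded D /\ jordan_domain D /\
    (exists phi, homeo0 phi /\ phi_uniform D phi) /\
    ~ (exists psi, homeo0 psi /\ phi_uniform (ext_closure D) psi).
Proof.
  exists Dc. split; [apply D_bounded|]. split; [apply D_jordan|]. split.
  - exists phi0. split; [apply phi0_homeo|apply D_uniform].
  - apply E_not_uniform.
Qed.
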